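(* Let $M$ be a $4$-dimensional Riemannian manifold with metric $g$ and affinor structure $q$ (a $(1,1)$-tensor field) whose components in local coordinates $(x^1,x^2,x^3,x^4)$ are $$g_{ij}=\begin{pmatrix} A & B & C & B\\ B & A & B & C\\ C & B & A & B\\ B & C & B & A\end{pmatrix},\qquad q_i^{\ j}=\begin{pmatrix} 0&1&0&0\\0&0&1&0\\0&0&0&1\\1&0&0&0\end{pmatrix},$$ where $A,B,C$ are smooth functions with $0<B<C<A$. Then for every point $p\in M$ there exists an orthonormal $q$-base in $T_pM$, i.e. a vector $x\in T_pM$ such that $\{x,qx,q^2x,q^3x\}$ is a basis of $T_pM$ which is orthonormal with respect to $g$.
   Context: A $q$-base of $T_pM$ is a basis of $T_pM$ of the form $\{x,qx,q^2x,q^3x\}$ for some $x\in T_pM$. The structure satisfies $q^4=\mathrm{id}$ and $g(qx,qy)=g(x,y)$ for all vector fields $x,y$; the metric $g$ is positive definite under the stated inequalities. *)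

(* Defs.v *)
(* Pointwise (tangent-space) formalization: at a point p,
   T_pM = R^4 with coordinate basis d_1..d_4, vectors as row vectors. *)
From HB Require Import structures.
From mathcomp Require Import all_boot all_order all_algebra.
From mathcomp Require Import reals.
Set Implicit Arguments. Unset Strict Implicit. Unset Printing Implicit Defensive.
Import Order.TTheory GRing.Theory Num.Theory.
Local Open Scope ring_scope.

(* g_ij : circulant matrix with first row (A, B, C, B) *)
Definition gmat (R : nzRingType) (A B C : R) : 'M[R]_4 :=
  \matrix_(i < 4, j < 4)
    (let d := ((j + 4 - i) %% 4)%N in
     if d == 0%N then A else if d == 2%N then C else B).

Definition qmat (R : nzRingType) : 'M[R]_4 :=
  \matrix_(i < 4, j < 4) ((j == (i.+1 %% 4)%N :> nat)%:R : R).

Definition qact (R : nzRingType) (x : 'rV[R]_4) : 'rV[R]_4 := x *m qmat R.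

Definition gform (R : nzRingType) (G : 'M[R]_4) (x y : 'rV[R]_4) : R :=
  (x *m G *m y^T) 0 0.

Definition qfamily (R : nzRingType) (x : 'rV[R]_4) : 'M[R]_4 :=
  \matrix_(k < 4) iter k (@qact R) x.

Definition orthonormal_qbase (R : nzRingType) (G : 'M[R]_4) (x : 'rV[R]_4) : Prop :=
  (forall k l : 'I_4,
     gform G (row k (qfamily x)) (row l (qfamily x)) = (k == l)%:R).

Definition is_basis4 (R : fieldType) (x : 'rV[R]_4) : bool :=
  row_free (qfamily x).

(* Main.v *)
Require Import Defs.
From HB Require Import structures.
From mathcomp Require Import all_boot all_order all_algebra.
From mathcomp Require Import reals.
From mathcomp Require Import ring lra.
Set Implicit Arguments.
Import Order.TTheory GRing.Theory Num.Theory.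
Local Open Scope ring_scope.

Definition r4 {R : nzRingType} (u0 u1 u2 u3 : R) : 'rV[R]_4 :=
  \row_(j < 4) [:: u0; u1; u2; u3]`_j.

Lemma qact_r4 (R : comNzRingType) (u0 u1 u2 u3 : R) :
  qact (r4 u0 u1 u2 u3) = r4 u3 u0 u1 u2.
Proof.
apply/rowP => j; rewrite /qact /qmat /r4 !mxE !big_ord_recr big_ord0 /= !mxE /=.
case: j => [[|[|[|[|j]]]] Hj] //=; ring.
Qed.

Lemma gform_r4 (R : comNzRingType) (A B C u0 u1 u2 u3 v0 v1 v2 v3 : R) :
  gform (gmat A B C) (r4 u0 u1 u2 u3) (r4 v0 v1 v2 v3) =
  u0 * (A*v0 + B*v1 + C*v2 + B*v3) + u1 * (B*v0 + A*v1 + B*v2 + C*v3)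
  + u2 * (C*v0 + B*v1 + A*v2 + B*v3) + u3 * (B*v0 + C*v1 + B*v2 + A*v3).
Proof.
rewrite /gform /gmat /r4 !mxE !big_ord_recr big_ord0 /= !mxE.
rewrite !big_ord_recr !big_ord0 /= !mxE /=.
ring.
Qed.

Lemma orth (R : fieldType) (a b c : R) : 4 != 0 :> R -> a != 0 -> b != 0 -> c != 0 ->
  orthonormal_qbase (gmat ((a^-2 + b^-2 + b^-2 + c^-2)/4) ((a^-2 - c^-2)/4) ((a^-2 - b^-2 - b^-2 + c^-2)/4))
    (r4 ((a+b+b+c)/4) ((a-c)/4) ((a-b-b+c)/4) ((a-c)/4)).
Proof.
move=> h4 ha hb hc k l; rewrite /qfamily !rowK.
case: k => [[|[|[|[|k]]]] Hk] //; case: l => [[|[|[|[|l]]]] Hl] //=;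
rewrite ?qact_r4 gform_r4; field; by rewrite ?h4 ?ha ?hb ?hc.
Qed.

Lemma gram_entry (R : nzRingType) (G X : 'M[R]_4) k l :
  (X *m G *m X^T) k l = gform G (row k X) (row l X).
Proof.
rewrite /gform tr_row -row_mul !mxE; apply: eq_bigr => j _; by rewrite !mxE.
Qed.

Theorem theorem2p2 (R : realType) (A B C : R) :
  0 < B -> B < C -> C < A ->
  exists x : 'rV[R]_4,
    is_basis4 x /\ orthonormal_qbase (gmat A B C) x.
Proof.
move=> hB hBC hCA.
have l0 : 0 < A + B + B + C by lra.
have l1 : 0 < A - C by lra.
have l2 : 0 < A - B - B + C by lra.
set a := (Num.sqrt (A + B + B + C))^-1.
set b := (Num.sqrt (A - C))^-1.
set c := (Num.sqrt (A - B - B + C))^-1.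
have ea : a^-2 = A + B + B + C by rewrite /a exprVn invrK sqr_sqrtr // ltW.
have eb : b^-2 = A - C by rewrite /b exprVn invrK sqr_sqrtr // ltW.
have ec : c^-2 = A - B - B + C by rewrite /c exprVn invrK sqr_sqrtr // ltW.
have ha : a != 0 by rewrite invr_eq0 sqrtr_eq0 -ltNge.
have hb : b != 0 by rewrite invr_eq0 sqrtr_eq0 -ltNge.
have hc : c != 0 by rewrite invr_eq0 sqrtr_eq0 -ltNge.
have h4 : 4 != 0 :> R by rewrite pnatr_eq0.
have H := @orth _ a b c h4 ha hb hc.
rewrite ea eb ec in H.
have -> : gmat A B C = gmat ((A + B + B + C + (A - C) + (A - C) + (A - B - B + C)) / 4)
      ((A + B + B + C - (A - B - B + C)) / 4)
      ((A + B + B + C - (A - C) - (A - C) + (A - B - B + C)) / 4).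
  by congr gmat; field.
eexists; split; last exact: H.
rewrite /is_basis4 row_free_unit.
set X := qfamily _.
suff HX : X *m (gmat ((A + B + B + C + (A - C) + (A - C) + (A - B - B + C)) / 4)
      ((A + B + B + C - (A - B - B + C)) / 4)
      ((A + B + B + C - (A - C) - (A - C) + (A - B - B + C)) / 4) *m X^T) = 1%:M.
  by case: (mulmx1_unit HX).
rewrite mulmxA; apply/matrixP => k l; rewrite gram_entry H mxE.
by case: eqP.
Qed.
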